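(* Let $P$ be a finite poset and $K:P\to\mathcal{S}$ a diagram of finite simplicial complexes and simplicial maps. If $p\in P$ is such that $\hat F_p=\{r\in P: r>p\}$ is homotopically trivial (in particular if $p$ is an up beat point or an up weak point of $P$), then $\operatorname{hocolim} K\simeq\operatorname{hocolim} K|_{P\smallsetminus\{p\}}$.
   Context: $P$ is viewed as a category with a unique arrow $p\to q$ iff $p\le q$; $\mathcal{S}$ is the category of topological spaces and $\operatorname{hocolim}$ is the usual homotopy colimit in $\mathcal{S}$; $K|_{P\smallsetminus\{p\}}$ is the restricted diagram and $\simeq$ denotes homotopy equivalence. A finite poset is homotopically trivial if its order complex (simplicial complex of nonempty chains) is contractible. $p$ is an up beat point if $\hat F_p$ has a minimum; a finite poset is contractible if it can be reduced to one point by successively removing points $x$ such that $\{y>x\}$ has a minimum or $\{y<x\}$ has a maximum; $p$ is an up weak point if $\hat F_p$ is contractible in this sense. *)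

(* Defs.v *)
From HB Require Import structures.
From mathcomp Require Import all_boot all_order all_algebra.
From mathcomp Require Import all_classical all_reals.
From mathcomp Require Import topology function_spaces num_topology.
Import numFieldTopology.Exports.
Set Implicit Arguments. Unset Strict Implicit. Unset Printing Implicit Defensive.
Import Order.TTheory GRing.Theory Num.Theory.
Local Open Scope classical_set_scope.
Local Open Scope ring_scope.

Definition unit_interval (R : realType) : set R := [set s | 0 <= s <= 1].
Arguments unit_interval : clear implicits.

Definition homotopic_in (R : realType) (T U : topologicalType)
    (A : set T) (B : set U) (f g : T -> U) : Prop :=
  exists H : (R * T)%type -> U,
    {within unit_interval R `*` A, continuous H} /\
    (forall s x, unit_interval R s -> A x -> B (H (s, x))) /\
    (forall x, A x -> H (0, x) = f x /\ H (1, x) = g x).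

Definition homotopy_equiv (R : realType) (T U : topologicalType)
    (A : set T) (B : set U) : Prop :=
  exists (f : T -> U) (g : U -> T),
    [/\ {within A, continuous f} /\ (forall x, A x -> B (f x)),
        {within B, continuous g} /\ (forall y, B y -> A (g y)),
        homotopic_in R A A (g \o f) id & homotopic_in R B B (f \o g) id].

Definition contractible (R : realType) (T : topologicalType) (A : set T) : Prop :=
  exists x0, A x0 /\ homotopy_equiv R A [set x0].

Record fsc := FSC {
  vtx : finType;
  face : {set {set vtx}};
  face_nonempty : (finset.set0 : {set vtx}) \notin face;
  face_down : forall s t : {set vtx}, s \in face -> t \subset s -> t != (finset.set0 : {set vtx}) -> t \in face
}.

Definition realization (R : realType) (C : fsc) : set {ptws vtx C -> R} :=
  [set x | [/\ forall v, 0 <= x v, \sum_v x v = 1 & [set v | x v != 0]%SET \in face C]].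
Arguments realization R C : clear implicits.

(** Pushforward of barycentric coordinates along a vertex map
    (= the affine extension of a simplicial map). *)
Definition push (R : realType) (V W : finType) (g : V -> W) (x : V -> R) : W -> R :=
  fun w => \sum_(v | g v == w) x v.

Unset Implicit Arguments.
Record diagram (d : Order.disp_t) (P : finPOrderType d) := Diagram {
  dK : P -> fsc;
  dmap : forall p q : P, vtx (dK p) -> vtx (dK q);
  dmap_simplicial : forall (p q : P) (s : {set vtx (dK p)}),
    (p <= q)%O -> s \in face (dK p) -> [set dmap p q v | v in s]%SET \in face (dK q);
  dmap_id : forall (p : P) v, dmap p p v = v;
  dmap_comp : forall (p q r : P) v, (p <= q)%O -> (q <= r)%O ->
    dmap q r (dmap p q v) = dmap p r v
}.
Arguments diagram {d}.
Arguments dK {d P}.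
Arguments dmap {d P}.
Set Implicit Arguments.

Definition hidx d (P : finPOrderType d) (K : diagram P) : finType :=
  (P + {q : P & vtx (dK K q)})%type.

(** The (Bousfield–Kan) homotopy colimit of K restricted to S ⊆ P:
    the quotient of  ⊔_{chains p0 < ... < pk in S} Δ^k × |K(p0)|  by the
    face identifications, realised concretely (and homeomorphically) as the
    set of points  z = (t_q , t_q · K(p0 -> q)_*(x))_q ,  where t is a point of
    the simplex spanned by a chain of S lying above p0 ∈ S and x ∈ |K(p0)|. *)
Definition hocolim_on (R : realType) d (P : finPOrderType d) (K : diagram P)
    (S : {set P}) : set {ptws hidx K -> R} :=
  [set z | exists (p0 : P) (t : P -> R) (x : vtx (dK K p0) -> R),
     [/\ p0 \in S /\ realization R (dK K p0) x,
         (forall q, 0 <= t q) /\ \sum_q t q = 1,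
         (forall q, t q != 0 -> q \in S /\ (p0 <= q)%O),
         (forall q r, t q != 0 -> t r != 0 -> (q <= r)%O || (r <= q)%O) &
         z = fun i => match i with
                      | inl q => t q
                      | inr (existT q v) => t q * push (dmap K p0 q) x v
                      end]].

Definition order_complex_up (R : realType) d (P : finPOrderType d) (p : P)
    : set {ptws P -> R} :=
  [set a | [/\ forall q, 0 <= a q, \sum_q a q = 1,
              (forall q, a q != 0 -> (p < q)%O) &
              (forall q r, a q != 0 -> a r != 0 -> (q <= r)%O || (r <= q)%O)]].

Arguments order_complex_up R {d P} p.
Arguments hocolim_on R {d P} K S.

Definition homotopically_trivial_up (R : realType) d (P : finPOrderType d) (p : P) :=
  contractible R (order_complex_up R p).

Arguments homotopically_trivial_up R {d P} p.

(* Main.v *)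
Require Import Defs.
From HB Require Import structures.
From mathcomp Require Import all_boot all_order all_algebra.
From mathcomp Require Import all_classical all_reals.
From mathcomp Require Import topology function_spaces num_topology.
From mathcomp Require Import normedtype.
From mathcomp Require Import ring lra.
Import numFieldTopology.Exports.
Set Implicit Arguments. Unset Strict Implicit. Unset Printing Implicit Defensive.
Import Order.TTheory GRing.Theory Num.Theory.
Local Open Scope classical_set_scope.
Local Open Scope ring_scope.

Section Push.
Variable R : realType.

Lemma push_ge0 (V W : finType) (g : V -> W) (x : V -> R) :
  (forall v, 0 <= x v) -> forall w, 0 <= push g x w.
Proof. by move=> x0 w; rewrite /push; apply: sumr_ge0. Qed.

Lemma push_sum (V W : finType) (g : V -> W) (x : V -> R) :
  \sum_w push g x w = \sum_v x v.
Proof.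
rewrite /push [RHS](partition_big g predT) //=.
Qed.

Lemma push_comp (U V W : finType) (g1 : U -> V) (g2 : V -> W) (x : U -> R) w :
  push g2 (push g1 x) w = push (g2 \o g1) x w.
Proof.
rewrite /push [RHS](partition_big g1 (fun v => g2 v == w)) /=; last first.
  by [].
apply: eq_bigr => v /eqP gv; apply: eq_bigl => u.
by case: (g1 u =P v) => [->|]; rewrite ?gv ?andbF ?eqxx.
Qed.

Lemma push_neq0 (V W : finType) (g : V -> W) (x : V -> R) w :
  push g x w != 0 -> exists v, g v = w /\ x v != 0.
Proof.
move=> H; apply: contrapT => hn; move/eqP: H; apply; rewrite /push big1 //.
move=> v /eqP gv; case: (eqVneq (x v) 0) => // xv.
by exfalso; apply: hn; exists v.
Qed.

Lemma push_gt0 (V W : finType) (g : V -> W) (x : V -> R) v :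
  (forall v, 0 <= x v) -> x v != 0 -> push g x (g v) != 0.
Proof.
move=> x0 xv; rewrite /push (bigD1 v) //=.
rewrite gt_eqF //; apply: ltr_pwDl; first by rewrite lt_def xv x0.
by apply: sumr_ge0.
Qed.

Lemma push_le1 (V W : finType) (g : V -> W) (x : V -> R) w :
  (forall v, 0 <= x v) -> \sum_v x v = 1 -> push g x w <= 1.
Proof.
move=> x0 x1; rewrite -x1 /push [X in _ <= X](bigID (fun v => g v == w)) /=.
by rewrite lerDl sumr_ge0.
Qed.

End Push.

Lemma realization_push (R : realType) d (P : finPOrderType d) (K : diagram P)
  (p q : P) (x : vtx (dK K p) -> R) : (p <= q)%O ->
  realization R (dK K p) x -> realization R (dK K q) (push (dmap K p q) x).
Proof.
move=> pq [x0 x1 xf]; split.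
- exact: push_ge0.
- by rewrite push_sum.
- have -> : [set w | push (dmap K p q) x w != 0]%SET =
            [set dmap K p q v | v in [set v | x v != 0]%SET]%SET.
    apply/setP => w; rewrite !inE; apply/idP/imsetP.
      by move=> /push_neq0 [v [<- xv]]; exists v; rewrite ?inE.
    by move=> [v]; rewrite inE => xv ->; apply: push_gt0.
  exact: dmap_simplicial.
Qed.

Lemma sum1_neq0 (R : realType) (I : finType) (t : I -> R) :
  \sum_i t i = 1 -> exists i, t i != 0.
Proof.
move=> t1; apply: contrapT => hn; move: t1; rewrite big1 => [/eqP|i _].
  by rewrite eq_sym oner_eq0.
by case: (eqVneq (t i) 0) => // ti; exfalso; apply: hn; exists i.
Qed.

Lemma chain_min (R : realType) d (P : finPOrderType d) (t : P -> R) :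
  (forall q r, t q != 0 -> t r != 0 -> (q <= r)%O || (r <= q)%O) ->
  \sum_q t q = 1 -> exists m, t m != 0 /\ forall q, t q != 0 -> (m <= q)%O.
Proof.
move=> ch /sum1_neq0 [q0 tq0].
pose M m := #|[set r | (t r != 0) && (r < m)%O]%SET|.
case: (@arg_minnP _ q0 (fun i => t i != 0) M tq0) => m tm hmin.
exists m; split => // q tq.
have /orP [//|qm] := ch _ _ tm tq.
case: (eqVneq q m) => [->//|qnm].
have qltm : (q < m)%O by rewrite lt_neqAle qnm qm.
exfalso; move: (hmin q tq); rewrite leqNgt => /negP; apply.
have sub : [set r | (t r != 0) && (r < q)%O]%SET \proper [set r | (t r != 0) && (r < m)%O]%SET.
  apply/properP; split.
  apply/fintype.subsetP => r; rewrite !inE => /andP [-> rq] /=.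
  exact: lt_trans rq qltm.
  by exists q; rewrite !inE ?tq ?qltm ?ltxx.
exact: proper_card sub.
Qed.

Section Hoc.
Variables (R : realType) (d : Order.disp_t) (P : finPOrderType d) (K : diagram P).
Local Notation T := {ptws hidx K -> R}.

Lemma push_dmap_comp (p0 m q : P) (x : vtx (dK K p0) -> R) v :
  (p0 <= m)%O -> (m <= q)%O ->
  push (dmap K m q) (push (dmap K p0 m) x) v = push (dmap K p0 q) x v.
Proof.
move=> h1 h2; rewrite push_comp /push; apply: eq_bigl => u /=.
by rewrite dmap_comp.
Qed.

Lemma hoc_intro (S : {set P}) (z : T) p0 (x : vtx (dK K p0) -> R) (t : P -> R) :
  realization R (dK K p0) x ->
  (forall q, 0 <= t q) -> \sum_q t q = 1 ->
  (forall q, t q != 0 -> q \in S /\ (p0 <= q)%O) ->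
  (forall q r, t q != 0 -> t r != 0 -> (q <= r)%O || (r <= q)%O) ->
  (forall q, z (inl q) = t q) ->
  (forall q v, z (inr (existT _ q v)) = t q * push (dmap K p0 q) x v) ->
  hocolim_on R K S z.
Proof.
move=> xr t0 t1 tS ch zl zr.
have [m [tm mmin]] := chain_min ch t1.
have [mS p0m] := tS _ tm.
exists m, t, (push (dmap K p0 m) x); split => //.
- by split => //; apply: realization_push.
- by move=> q tq; split; [exact: (tS _ tq).1 | exact: mmin].
apply/funext => -[q|[q v]] //=; rewrite zr.
case: (eqVneq (t q) 0) => [->|tq]; first by rewrite !mul0r.
by rewrite push_dmap_comp // mmin.
Qed.

Lemma hoc_elim (S : {set P}) (z : T) : hocolim_on R K S z ->
  exists p0 (x : vtx (dK K p0) -> R) (t : P -> R),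
  [/\ p0 \in S /\ realization R (dK K p0) x,
      (forall q, 0 <= t q) /\ \sum_q t q = 1,
      (forall q, t q != 0 -> q \in S /\ (p0 <= q)%O),
      (forall q r, t q != 0 -> t r != 0 -> (q <= r)%O || (r <= q)%O) &
      (forall q, z (inl q) = t q) /\
      (forall q v, z (inr (existT _ q v)) = t q * push (dmap K p0 q) x v)].
Proof.
move=> [p0 [t [x [h1 h2 h3 h4 ->]]]]; exists p0, x, t; split => //.
Qed.

End Hoc.


Section Main.
Variables (R : realType) (d : Order.disp_t) (P : finPOrderType d) (K : diagram P) (p : P).
Local Notation T := {ptws hidx K -> R}.
Local Notation A := (order_complex_up R p).
Variables (H : (R * {ptws P -> R})%type -> {ptws P -> R}) (c : {ptws P -> R}).
Hypotheses (HA : forall s a, unit_interval R s -> A a -> A (H (s, a)))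
  (H1 : forall a, A a -> H (1, a) = a) (cA : A c).

Definition tt (z : T) q := z (inl q).
Definition beta z := tt z p.
Definition gam z := \sum_(q | (p < q)%O) tt z q.
Definition sig z := beta z + gam z.
Definition mm (s : R) := Num.max 0 (2 * s - 1).
Definition mu s z := 1 - s * (beta z / sig z).
Definition clamp (y : R) := Num.min 1 (Num.max 0 y).
Definition uu z : {ptws P -> R} :=
  if gam z == 0 then c else (fun q => if (p < q)%O then tt z q / gam z else 0).
Definition hh s z := H (clamp (3 * mu s z - 2), uu z).
Definition yy (z : T) q (v : vtx (dK K q)) :=
  if beta z != 0 then push (dmap K p q) (fun w => z (inr (existT _ p w)) / beta z) v
  else if tt z q != 0 then z (inr (existT _ q v)) / tt z q else 0.
Arguments yy : clear implicits.
Definition F s z : T := fun i =>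
  match i with
  | inl q => if q == p then beta z * (1 - mm s)
             else if (p < q)%O then (gam z + beta z * mm s) * hh s z q
             else z (inl q)
  | inr (existT q v) => if q == p then (1 - mm s) * z (inr (existT _ q v))
             else if (p < q)%O then (gam z + beta z * mm s) * hh s z q * yy z q v
             else z (inr (existT _ q v))
  end.

Lemma sum_split (f : P -> R) : \sum_q f q =
  f p + \sum_(q | (p < q)%O) f q + \sum_(q | (q != p) && ~~ (p < q)%O) f q.
Proof.
rewrite (bigD1 p) //= -addrA; congr (_ + _).
rewrite (bigID (fun q => (p < q)%O)) /=; congr (_ + _).
by apply: eq_bigl => q; case: (eqVneq q p) => [->|]; rewrite ?ltxx ?andbT.
Qed.

Lemma A_sum_up a : A a -> \sum_(q | (p < q)%O) a q = 1.
Proof.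
move=> [a0 a1 aup _]; move: a1; rewrite sum_split.
have -> : a p = 0 by case: (eqVneq (a p) 0) => // /aup; rewrite ltxx.
rewrite add0r [X in _ + X]big1 ?addr0 // => q /andP [_ nq].
by case: (eqVneq (a q) 0) => // /aup; rewrite (negbTE nq).
Qed.

Lemma clamp01 y : unit_interval R (clamp y).
Proof.
rewrite /unit_interval /= /clamp; apply/andP; split.
  by rewrite le_min ler01 le_max lexx.
by rewrite ge_min lexx.
Qed.

Lemma clamp1 : clamp 1 = 1.
Proof. by rewrite /clamp (max_idPr ler01) (min_idPr (lexx _)). Qed.

Lemma hh_uu s z : A (uu z) -> beta z = 0 -> hh s z = uu z.
Proof.
move=> uA b0; rewrite /hh /mu b0 mul0r mulr0 subr0.
have -> : 3 * 1 - 2 = 1 :> R by rewrite mulr1; apply/eqP; rewrite subr_eq.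
by rewrite clamp1 H1.
Qed.

Lemma hhA s z : A (uu z) -> A (hh s z).
Proof. by move=> uA; apply: HA => //; apply: clamp01. Qed.

Section Rep.
Variables (S : {set P}) (z : T) (p0 : P) (x : vtx (dK K p0) -> R) (t : P -> R).
Hypotheses (xr : realization R (dK K p0) x) (t0 : forall q, 0 <= t q)
  (t1 : \sum_q t q = 1) (tS : forall q, t q != 0 -> q \in S /\ (p0 <= q)%O)
  (ch : forall q r, t q != 0 -> t r != 0 -> (q <= r)%O || (r <= q)%O)
  (zl : forall q, z (inl q) = t q)
  (zr : forall q v, z (inr (existT _ q v)) = t q * push (dmap K p0 q) x v).

Lemma ttE q : tt z q = t q. Proof. exact: zl. Qed.

Lemma beta_ge0 : 0 <= beta z. Proof. by rewrite /beta ttE. Qed.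
Lemma gam_ge0 : 0 <= gam z. Proof. by apply: sumr_ge0 => q _; rewrite ttE. Qed.

Lemma gam0 : gam z = 0 -> forall q, (p < q)%O -> t q = 0.
Proof.
move=> /eqP; rewrite /gam psumr_eq0; last by move=> q _; rewrite ttE.
by move=> /allP h q pq; have := h q (mem_index_enum _); rewrite pq ttE => /implyP/(_ isT)/eqP.
Qed.

Lemma uuA : A (uu z).
Proof.
rewrite /uu; case: eqP => [//|/eqP g0].
have gp : 0 < gam z by rewrite lt_def g0 gam_ge0.
split.
- by move=> q; case: ifP => // _; rewrite divr_ge0 ?ttE // ltW.
- rewrite sum_split ltxx add0r [X in _ + X]big1 ?addr0; last first.
    by move=> q /andP [_ /negbTE ->].
  rewrite (eq_bigr (fun q => tt z q / gam z)); last by move=> q ->.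
  by rewrite -mulr_suml divff.
- by move=> q; case: ifP => // _; rewrite eqxx.
- move=> q r; case: ifP => _; last by rewrite eqxx.
  case: ifP => _; last by rewrite eqxx.
  rewrite !mulf_eq0 !invr_eq0 (negbTE g0) !orbF !ttE; exact: ch.
Qed.

Lemma gam_uu q : (p < q)%O -> gam z * uu z q = t q.
Proof.
move=> pq; rewrite /uu; case: eqP => [g0|/eqP g0].
  by rewrite g0 mul0r (gam0 g0).
by rewrite pq mulrC -mulrA mulVf // mulr1 ttE.
Qed.

Lemma push_p (v : vtx (dK K p)) : t p != 0 ->
  z (inr (existT _ p v)) / beta z = push (dmap K p0 p) x v.
Proof. by move=> tp; rewrite zr /beta ttE mulrC mulKf. Qed.

Lemma yy_push q v : (p < q)%O -> (beta z != 0 \/ t q != 0) ->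
  yy z q v = push (dmap K p0 q) x v.
Proof.
move=> pq h; rewrite /yy; case: ifP => [b0|/negbT]; last first.
  rewrite negbK => /eqP b0; case: h => [|tq]; first by rewrite b0 eqxx.
  by rewrite ttE tq zr mulrC mulKf.
have tp : t p != 0 by rewrite -ttE.
have p0p : (p0 <= p)%O := (tS tp).2.
rewrite -(push_dmap_comp x v p0p (ltW pq)) /push; apply: eq_bigr => w _.
by rewrite push_p.
Qed.

Lemma yy_bnd q v : (p < q)%O -> 0 <= yy z q v <= 1.
Proof.
move=> pq; have [xr0 xr1 _] := xr.
have h := push_ge0 (dmap K p0 q) xr0 v; have h' := push_le1 (dmap K p0 q) v xr0 xr1.
case: (eqVneq (beta z) 0) => [b0|b0]; last by rewrite yy_push ?h ?h' //; left.
case: (eqVneq (t q) 0) => [tq|tq]; last by rewrite yy_push ?h ?h' //; right.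
by rewrite /yy b0 eqxx /= ttE tq eqxx lexx ler01.
Qed.

Lemma hh_mu1 s : mu s z = 1 -> hh s z = uu z.
Proof.
move=> m1; rewrite /hh m1.
have -> : 3 * 1 - 2 = 1 :> R by rewrite mulr1; apply/eqP; rewrite subr_eq.
by rewrite clamp1 H1 //; exact: uuA.
Qed.

Lemma F_id s : (mm s = 0 \/ beta z = 0) -> mu s z = 1 -> F s z = z.
Proof.
move=> hm m1; have bm : beta z * mm s = 0.
  by case: hm => ->; rewrite ?mulr0 ?mul0r.
apply/funext => -[q|[q v]] /=.
- case: eqP => [->|_].
    case: hm => [->|b0]; first by rewrite subr0 mulr1.
    by rewrite b0 mul0r -b0.
  case: ifP => // pq; rewrite bm addr0 hh_mu1 // gam_uu // zl //.
- case: eqP => [qp|_].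
    subst q; case: hm => [->|b0]; first by rewrite subr0 mul1r.
    by rewrite zr -ttE -/(beta z) b0 !mul0r mulr0.
  case: ifP => // pq; rewrite bm addr0 hh_mu1 // gam_uu // zr.
  case: (eqVneq (t q) 0) => [->|tq]; first by rewrite !mul0r.
  by rewrite yy_push //; right.
Qed.

Lemma mm_ge0 s : 0 <= mm s. Proof. by rewrite /mm le_max lexx. Qed.
Lemma mm_le1 s : s <= 1 -> mm s <= 1.
Proof. by move=> s1; rewrite /mm ge_max ler01 /=; lra. Qed.

Lemma F_supp s q : F s z (inl q) != 0 ->
  [\/ q = p /\ beta z != 0,
      [/\ (p < q)%O, hh s z q != 0 & (beta z != 0 \/ t q != 0)] |
      [/\ q != p, ~~ (p < q)%O & t q != 0]].
Proof.
rewrite /=; case: (eqVneq q p) => [->|qp].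
  by rewrite mulf_eq0 negb_or => /andP [b _]; constructor 1.
case: ifP => pq; last by rewrite zl => tq; constructor 3; rewrite ?pq.
rewrite mulf_eq0 negb_or => /andP [w hq]; constructor 2; split => //.
case: (eqVneq (beta z) 0) => [b0|]; [right|by left].
move: hq w; rewrite (hh_uu s uuA b0) /uu; case: (eqVneq (gam z) 0) => [g|g] hq w.
  by move: w; rewrite g b0 mul0r addr0 eqxx.
by move: hq; rewrite pq mulf_eq0 negb_or ttE => /andP [].
Qed.

Lemma F_mem s (S' : {set P}) : 0 <= s <= 1 -> (forall q, q != p -> q \in S') ->
  (mm s < 1 -> p \in S') -> hocolim_on R K S' (F s z).
Proof.
move=> /andP [s0 s1] Sq Sp.
have m0 := mm_ge0 s; have m1 := mm_le1 s1.
have [a0 a1 aup ach] := hhA s uuA.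
have b0 := beta_ge0; have g0 := gam_ge0.
pose t' q := F s z (inl q).
have tpE : t p = beta z by rewrite /beta ttE.
apply: (@hoc_intro _ _ _ _ S' (F s z) p0 x t') => //.
- move=> q; rewrite /t' /=; case: eqP => [_|_].
    by rewrite mulr_ge0 // subr_ge0.
  case: ifP => _; last by rewrite zl.
  by rewrite mulr_ge0 // addr_ge0 // mulr_ge0.
- rewrite sum_split.
  have e1 : \sum_(q | (p < q)%O) t' q = gam z + beta z * mm s.
    rewrite (eq_bigr (fun q => (gam z + beta z * mm s) * hh s z q)); last first.
      by move=> q pq; rewrite /t' /= (gt_eqF pq) pq.
    by rewrite -mulr_sumr A_sum_up ?mulr1 //; apply: hhA; apply: uuA.
  have e2 : \sum_(q | (q != p) && ~~ (p < q)%O) t' q =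
            \sum_(q | (q != p) && ~~ (p < q)%O) t q.
    apply: eq_bigr => q /andP [qp pq]; rewrite /t' /= (negbTE qp) (negbTE pq).
    exact: zl.
  have e3 : gam z = \sum_(q | (p < q)%O) t q by apply: eq_bigr => q _; rewrite ttE.
  have := t1; rewrite sum_split e1 e2 /t' /= eqxx tpE -e3; lra.
- move=> q tq'; case/F_supp: (tq') => [[qp bz]|[pq hq h]|[qp pq tq]].
  + subst q; split; last by apply: (tS _).2; rewrite tpE.
    apply: Sp; move: tq'; rewrite /t' /= eqxx.
    rewrite lt_neqAle m1 andbT; apply: contraNN => /eqP ->.
    by rewrite subrr mulr0.
  + split; first by apply: Sq; rewrite gt_eqF.
    case: h => [bz|tq]; last exact: (tS tq).2.
    apply: le_trans (ltW pq); apply: (tS _).2; rewrite tpE //.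
  + by split; [apply: Sq|exact: (tS tq).2].
- have mix : forall q r, (p < q)%O -> (beta z != 0 \/ t q != 0) ->
      r != p -> ~~ (p < r)%O -> t r != 0 -> (r <= q)%O.
    move=> q r pq h rp pr tr; case: h => [bz|tq].
      have tp : t p != 0 by rewrite tpE.
      have /orP [pr'|//] := ch tp tr; last by move=> rp'; apply: le_trans rp' (ltW pq).
      by exfalso; move: pr; rewrite lt_neqAle pr' andbT eq_sym rp.
    have /orP [qr|//] := ch tq tr.
    by exfalso; move: pr; rewrite (lt_le_trans pq qr).
  move=> q r /F_supp hq /F_supp hr.
  case: hq => [[-> bz]|[pq hq h]|[qp pq tq]];
  case: hr => [[-> bz']|[pr hr h']|[rp pr tr]].
  + by rewrite lexx.
  + by rewrite (ltW pr).
  + by apply: ch; rewrite ?tpE.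
  + by rewrite (ltW pq) orbT.
  + by apply: ach.
  + by rewrite (mix q r) ?orbT.
  + by apply: ch; rewrite ?tpE.
  + by rewrite (mix r q).
  + exact: ch.
- move=> q v /=; case: eqP => [qp|/eqP qp].
    subst q; rewrite zr /t' /= eqxx tpE; ring.
  case: ifP => pq; last by rewrite zr /t' /= (negbTE qp) pq zl.
  have -> : t' q = (gam z + beta z * mm s) * hh s z q by rewrite /t' /= (negbTE qp) pq.
  case: (eqVneq ((gam z + beta z * mm s) * hh s z q) 0) => [->|w].
    by rewrite !mul0r.
  have /F_supp : t' q != 0 by rewrite /t' /= (negbTE qp) pq.
  case => [[qp' _]|[_ _ h]|[_ pq' _]]; first by rewrite qp' eqxx in qp.
    by rewrite yy_push.
  by rewrite pq in pq'.
Qed.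

End Rep.
End Main.


Section Gen.
Variables (R : realType) (W : Type) (Fl : set_system W).
Context {FlF : Filter Fl}.

Lemma cvgD' (f g : W -> R) (a b : R) : f @ Fl --> a -> g @ Fl --> b ->
  (fun w => f w + g w) @ Fl --> a + b.
Proof. move=> ha hb; have := @cvgD _ R^o _ _ FlF f g a b ha hb. exact. Qed.
Lemma cvgB' (f g : W -> R) (a b : R) : f @ Fl --> a -> g @ Fl --> b ->
  (fun w => f w - g w) @ Fl --> a - b.
Proof. move=> ha hb; have := @cvgB _ R^o _ _ FlF f g a b ha hb. exact. Qed.
Lemma cvgM' (f g : W -> R) (a b : R) : f @ Fl --> a -> g @ Fl --> b ->
  (fun w => f w * g w) @ Fl --> a * b.
Proof. move=> ha hb; have := @cvgM R _ _ FlF f g a b ha hb. exact. Qed.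
Lemma cvgN' (f : W -> R) (a : R) : f @ Fl --> a -> (fun w => - f w) @ Fl --> - a.
Proof. move=> ha; have := @cvgN _ R^o _ _ FlF f a ha. exact. Qed.
Lemma cvgV' (f : W -> R) (a : R) : a != 0 -> f @ Fl --> a -> (fun w => (f w)^-1) @ Fl --> a^-1.
Proof. move=> a0 ha; have := @cvgV R _ _ FlF f a a0 ha. exact. Qed.
Lemma cvgn' (f : W -> R) (a : R) : f @ Fl --> a -> (fun w => `|f w|) @ Fl --> `|a|.
Proof. move=> ha; have := @cvg_norm _ R^o _ _ FlF f a ha. exact. Qed.
Lemma cvgc' (a : R) : (fun w : W => a) @ Fl --> a.
Proof. exact: (@cvg_cst R a W Fl FlF). Qed.

Lemma cvg_maxr (f g : W -> R) (a b : R) : f @ Fl --> a -> g @ Fl --> b ->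
  (fun w => Num.max (f w) (g w)) @ Fl --> Num.max a b.
Proof.
move=> fa gb; rewrite maxr_absE.
have -> : (fun w => Num.max (f w) (g w)) = (fun w => (f w + g w + `|f w - g w|) / 2).
  by apply/funext => w; rewrite maxr_absE.
apply: cvgM'; last exact: cvgc'.
by apply: cvgD'; [exact: cvgD'|apply: cvgn'; exact: cvgB'].
Qed.

Lemma cvg_minr (f g : W -> R) (a b : R) : f @ Fl --> a -> g @ Fl --> b ->
  (fun w => Num.min (f w) (g w)) @ Fl --> Num.min a b.
Proof.
move=> fa gb; rewrite minr_absE.
have -> : (fun w => Num.min (f w) (g w)) = (fun w => (f w + g w - `|f w - g w|) / 2).
  by apply/funext => w; rewrite minr_absE.
apply: cvgM'; last exact: cvgc'.
by apply: cvgB'; [exact: cvgD'|apply: cvgn'; exact: cvgB'].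
Qed.

Lemma cvg_sumr (I : finType) (Pr : pred I) (f : I -> W -> R) (a : I -> R) :
  (forall i, Pr i -> f i @ Fl --> a i) ->
  (fun w => \sum_(i | Pr i) f i w) @ Fl --> \sum_(i | Pr i) a i.
Proof.
move=> h; rewrite /index_enum; elim: (Finite.enum I) => [|i r IH].
  rewrite big_nil; under eq_cvg do rewrite big_nil; exact: cvg_cst.
rewrite big_cons; under eq_cvg do rewrite big_cons.
case: ifP => Pi; last exact: IH.
by apply: cvgD' => //; apply: h.
Qed.

Lemma squeeze0 (f g : W -> R) : (\forall w \near Fl, 0 <= f w <= g w) ->
  g @ Fl --> (0 : R) -> f @ Fl --> (0 : R).
Proof.
move=> h g0; apply: (@squeeze_cvgr _ _ FlF R (fun=> 0) g) => //.
exact: cvgc'.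
Qed.

Lemma cvg_near_eq (f g : W -> R) (l : R) : (\forall w \near Fl, f w = g w) ->
  g @ Fl --> l -> f @ Fl --> l.
Proof.
by move=> e gl; apply: cvg_trans gl; apply: near_eq_cvg; apply: filterS e => w /= ->.
Qed.

Lemma cvg_to_within (U : topologicalType) (g : W -> U) (D : set U) (x0 : U) :
  g @ Fl --> x0 -> (\forall w \near Fl, D (g w)) -> g @ Fl --> within D (nbhs x0).
Proof.
move=> gx gD P WP; have := gx _ WP => /= h.
by apply: filterS2 h gD => w /= + Dw; apply.
Qed.

End Gen.

Lemma initial_cvg (S : choiceType) (T : topologicalType) (f : S -> T)
  (F : set_system S) (s : S) : Filter F -> f @ F --> f s ->
  F --> (s : initial_topology f).
Proof.
move=> FF h A; rewrite nbhsE => -[B [Bo Bs] BA].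
case: Bo => U Uo UB.
have : nbhs (f s) U.
  by apply: open_nbhs_nbhs; split => //; rewrite -UB in Bs.
move=> /h; rewrite nbhs_filterE /= => hU; apply: filterS hU => x Ux.
by apply: BA; rewrite -UB.
Qed.

Lemma ptws_cvg (R : realType) (W : Type) (Fl : set_system W) {FlF : Filter Fl} (I : Type)
  (Zf : W -> {ptws I -> R}) (z0 : {ptws I -> R}) :
  (forall i, (fun w => Zf w i) @ Fl --> z0 i) -> Zf @ Fl --> z0.
Proof.
move=> h.
apply/cvg_sup => i.
apply: initial_cvg; exact: h.
Qed.
Lemma ptws_coord (R : realType) (W : Type) (Fl : set_system W) {FlF : Filter Fl} (I : Type)
  (Zf : W -> {ptws I -> R}) (z0 : {ptws I -> R}) :
  Zf @ Fl --> z0 -> forall i, (fun w => Zf w i) @ Fl --> z0 i.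
Proof.
move=> hZ i; have := (cvg_sup _ _ _).1 hZ i.
move=> h; apply: (cvg_comp (fun w => Zf w) (fun z : {ptws I -> R} => z i) (h _)); exact: initial_continuous.
Qed.

Section Cont.
Variables (R : realType) (d : Order.disp_t) (P : finPOrderType d) (K : diagram P) (p : P).
Local Notation T := {ptws hidx K -> R}.
Local Notation A := (order_complex_up R p).
Local Notation Xs := (hocolim_on R K [set: P]).
Variables (H : (R * {ptws P -> R})%type -> {ptws P -> R}) (c : {ptws P -> R}).
Hypotheses (HA : forall s a, unit_interval R s -> A a -> A (H (s, a)))
  (H0 : forall a, A a -> H (0, a) = c)
  (H1 : forall a, A a -> H (1, a) = a) (cA : A c)
  (Hc : {within unit_interval R `*` A, continuous H}).

Local Notation FF := (F p H c).
Local Notation hhh := (hh p H c).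
Local Notation uuu := (uu p c).

Lemma A_le1 a q : A a -> a q <= 1.
Proof.
move=> [a0 a1 _ _]; rewrite -a1 (bigD1 q) //= lerDl.
by apply: sumr_ge0 => r _.
Qed.

Lemma XuuA z : Xs z -> A (uuu z).
Proof.
move=> /hoc_elim [p0 [x [t [[_ xr] [t0 t1] tS ch [zl zr]]]]].
exact: (uuA cA t0 ch zl).
Qed.

Lemma Xbeta_ge0 z : Xs z -> 0 <= beta p z.
Proof. by move=> /hoc_elim [p0 [x [t [_ [t0 _] _ _ [zl _]]]]]; rewrite /beta /tt zl. Qed.

Lemma Xgam_ge0 z : Xs z -> 0 <= gam p z.
Proof.
move=> /hoc_elim [p0 [x [t [_ [t0 _] _ _ [zl _]]]]].
by apply: sumr_ge0 => q _; rewrite /tt zl.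
Qed.

Lemma Xyy_bnd z q (v : vtx (dK K q)) : Xs z -> (p < q)%O -> 0 <= yy p z v <= 1.
Proof.
move=> /hoc_elim [p0 [x [t [[_ xr] [t0 t1] tS ch [zl zr]]]]] pq.
exact: (yy_bnd xr tS zl zr).
Qed.

Lemma Xyy_eq z q (v : vtx (dK K q)) : Xs z -> (p < q)%O -> tt z q != 0 ->
  yy p z v = z (inr (existT _ q v)) / tt z q.
Proof.
move=> /hoc_elim [p0 [x [t [[_ xr] [t0 t1] tS ch [zl zr]]]]] pq tq.
rewrite (yy_push tS zl zr) //; last by right; rewrite -(ttE zl).
by rewrite zr (ttE zl) mulrC mulKf // -(ttE zl).
Qed.

Lemma clamp_neg (y : R) : y < 0 -> clamp y = 0.
Proof. by move=> y0; rewrite /clamp (max_idPl (ltW y0)) (min_idPr ler01). Qed.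

Lemma hh_c s z : Xs z -> 3 * mu p s z - 2 < 0 -> hhh s z = c.
Proof. by move=> Xz h; rewrite /hh clamp_neg // H0 //; exact: XuuA. Qed.

Lemma key_cvg (W : Type) (Fl : set_system W) {FlF : Filter Fl} (Sf : W -> R)
  (Zf : W -> T) (s0 : R) (z0 : T) q (Yf : W -> R) (y0 : R) :
  Sf @ Fl --> s0 -> Zf @ Fl --> z0 -> (\forall w \near Fl, Xs (Zf w)) -> Xs z0 ->
  (p < q)%O -> (\forall w \near Fl, 0 <= Yf w <= 1) ->
  (beta p z0 != 0 \/ tt z0 q != 0 -> Yf @ Fl --> y0) ->
  (fun w => (gam p (Zf w) + beta p (Zf w) * mm (Sf w)) * hhh (Sf w) (Zf w) q * Yf w)
    @ Fl --> (gam p z0 + beta p z0 * mm s0) * hhh s0 z0 q * y0.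
Proof.
move=> hS hZ hX X0 pq hY cY.
have hz := @ptws_coord R W Fl FlF _ Zf z0 hZ.
have cb : (fun w => beta p (Zf w)) @ Fl --> beta p z0 := hz (inl p).
have cg : (fun w => gam p (Zf w)) @ Fl --> gam p z0.
  by apply: cvg_sumr => r _; exact: hz (inl r).
have cm : (fun w => mm (Sf w)) @ Fl --> mm s0.
  by apply: cvg_maxr; [exact: cvgc'|apply: cvgB'; [apply: cvgM'; [exact: cvgc'|]|exact: cvgc']].
have cwt : (fun w => gam p (Zf w) + beta p (Zf w) * mm (Sf w)) @ Fl -->
    gam p z0 + beta p z0 * mm s0.
  by apply: cvgD' => //; apply: cvgM'.
have bnd : \forall w \near Fl, 0 <= gam p (Zf w) + beta p (Zf w) * mm (Sf w) /\
     0 <= hhh (Sf w) (Zf w) q <= 1.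
  apply: filterS hX => w Xw; split.
    by rewrite addr_ge0 ?Xgam_ge0 // mulr_ge0 ?Xbeta_ge0 ?mm_ge0.
  have [a0 _ _ _] := hhA HA (Sf w) (XuuA Xw).
  by rewrite a0 A_le1 //; apply: hhA => //; exact: XuuA.
have b00 := Xbeta_ge0 X0; have g00 := Xgam_ge0 X0.
case: (eqVneq (gam p z0 + beta p z0 * mm s0) 0) => [w0|w0].
  rewrite w0 !mul0r; apply: (squeeze0 (g := fun w => gam p (Zf w) + beta p (Zf w) * mm (Sf w))).
    apply: filterS2 bnd hY => w [wt0 /andP [h0 h1]] /andP [y0' y1]; apply/andP; split.
      by rewrite mulr_ge0 // mulr_ge0.
    by rewrite -mulrA ler_piMr // mulr_ile1.
  by rewrite w0 in cwt; exact: cwt.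
have sig0 : beta p z0 + gam p z0 != 0.
  apply: contraNneq w0 => h.
  have [-> ->] : beta p z0 = 0 /\ gam p z0 = 0 by split; lra.
  by rewrite mul0r addr0.
have cmu : (fun w => mu p (Sf w) (Zf w)) @ Fl --> mu p s0 z0.
  apply: cvgB'; first exact: cvgc'.
  apply: cvgM' => //; apply: cvgM' => //; apply: cvgV' => //.
  exact: cvgD'.
case: (eqVneq (gam p z0) 0) => [g0|g0].
  have b0 : beta p z0 != 0 by apply: contraNneq w0 => ->; rewrite g0 mul0r addr0.
  have m0 : mm s0 != 0 by apply: contraNneq w0 => ->; rewrite g0 mulr0 addr0.
  have s0h : 0 < 2 * s0 - 1.
    by move: m0; rewrite /mm; case: (leP (2 * s0 - 1) 0) => h //; rewrite ?eqxx.
  have mu0 : mu p s0 z0 = 1 - s0 by rewrite /mu /sig g0 addr0 mulfV // mulr1.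
  have neg0 : 3 * mu p s0 z0 - 2 < 0 by rewrite mu0; lra.
  have ev : \forall w \near Fl, 3 * mu p (Sf w) (Zf w) - 2 < 0.
    have cv3 : (fun w => 3 * mu p (Sf w) (Zf w) - 2) @ Fl --> 3 * mu p s0 z0 - 2.
      by apply: cvgB'; [apply: cvgM'; [exact: cvgc'|]|exact: cvgc'].
    exact: (@cvgr_lt R W Fl FlF _ _ cv3 0 neg0).
  rewrite (hh_c X0 neg0).
  apply: (cvg_near_eq (g := fun w => (gam p (Zf w) + beta p (Zf w) * mm (Sf w)) * c q * Yf w)).
    by apply: filterS2 hX ev => w Xw ew; rewrite hh_c.
  apply: cvgM'; last by apply: cY; left.
  by apply: cvgM'; [exact: cwt|exact: cvgc'].
have g_ev : \forall w \near Fl, gam p (Zf w) != 0.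
  by have := @cvgr_neq0 _ R^o _ _ FlF _ _ cg g0.
have cu : (fun w => uuu (Zf w)) @ Fl --> uuu z0.
  apply: ptws_cvg => r; rewrite {2}/uu (negbTE g0).
  apply: (cvg_near_eq (g := fun w => if (p < r)%O then tt (Zf w) r / gam p (Zf w) else 0)).
    by apply: filterS g_ev => w gw; rewrite /uu (negbTE gw).
  case: ((p < r)%O); last exact: cvgc'.
  by apply: cvgM'; [exact: hz (inl r)|apply: cvgV'].
have ccl : (fun w => clamp (3 * mu p (Sf w) (Zf w) - 2)) @ Fl -->
           clamp (3 * mu p s0 z0 - 2).
  apply: cvg_minr; first exact: cvgc'.
  apply: cvg_maxr; first exact: cvgc'.
  by apply: cvgB'; [apply: cvgM'; [exact: cvgc'|]|exact: cvgc'].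
have cpair : (fun w => (clamp (3 * mu p (Sf w) (Zf w) - 2), uuu (Zf w))) @ Fl -->
    ((clamp (3 * mu p s0 z0 - 2), uuu z0) : (R * {ptws P -> R})%type).
  exact: cvg_pair ccl cu.
have in_ev : \forall w \near Fl, (unit_interval R `*` A)
    (clamp (3 * mu p (Sf w) (Zf w) - 2), uuu (Zf w)).
  by apply: filterS hX => w Xw; split; [exact: clamp01|exact: XuuA].
have hin : (unit_interval R `*` A) (clamp (3 * mu p s0 z0 - 2), uuu z0).
  by split; [exact: clamp01|exact: XuuA].
have hcont := (@subspace_continuousP _ (unit_interval R `*` A) _ H).1 Hc _ hin.
have cH := cvg_comp _ _ (cvg_to_within (FlF:=FlF) cpair in_ev) hcont.
have chq : (fun w => hhh (Sf w) (Zf w) q) @ Fl --> hhh s0 z0 q.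
  by have := @ptws_coord R W Fl FlF P _ _ cH q.
have cW1 : (fun w => (gam p (Zf w) + beta p (Zf w) * mm (Sf w)) * hhh (Sf w) (Zf w) q)
    @ Fl --> (gam p z0 + beta p z0 * mm s0) * hhh s0 z0 q.
  exact: cvgM'.
case: (eqVneq (beta p z0) 0) => [b0|b0]; last by apply: cvgM' => //; apply: cY; left.
case: (eqVneq (tt z0 q) 0) => [t0|t0]; last by apply: cvgM' => //; apply: cY; right.
have e0 : (gam p z0 + beta p z0 * mm s0) * hhh s0 z0 q = 0.
  move: X0 => /hoc_elim [p0 [x [t [[_ xr] [tt0 t1] tS ch [zl zr]]]]].
  rewrite b0 mul0r addr0 (hh_uu H1 s0 (uuA cA tt0 ch zl) b0) (gam_uu c tt0 zl pq).
  by rewrite -(ttE zl).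
rewrite e0 mul0r; rewrite e0 in cW1.
apply: (squeeze0 (g := fun w => (gam p (Zf w) + beta p (Zf w) * mm (Sf w)) * hhh (Sf w) (Zf w) q)) => //.
apply: filterS2 bnd hY => w [wt0 /andP [h0 h1]] /andP [y0' y1]; apply/andP; split.
  by rewrite mulr_ge0 // mulr_ge0.
by rewrite ler_piMr // mulr_ge0.
Qed.

Lemma cvg_mm (W : Type) (Fl : set_system W) {FlF : Filter Fl} (Sf : W -> R) s0 :
  Sf @ Fl --> s0 -> (fun w => mm (Sf w)) @ Fl --> mm s0.
Proof.
move=> hS; apply: cvg_maxr; first exact: cvgc'.
by apply: cvgB'; [apply: cvgM'; [exact: cvgc'|]|exact: cvgc'].
Qed.

Lemma F_cvg (W : Type) (Fl : set_system W) {FlF : Filter Fl} (Sf : W -> R)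
  (Zf : W -> T) (s0 : R) (z0 : T) :
  Sf @ Fl --> s0 -> Zf @ Fl --> z0 -> (\forall w \near Fl, Xs (Zf w)) -> Xs z0 ->
  (fun w => FF (Sf w) (Zf w)) @ Fl --> FF s0 z0.
Proof.
move=> hS hZ hX X0.
have hz := @ptws_coord R W Fl FlF _ Zf z0 hZ.
have cm := @cvg_mm W Fl FlF Sf s0 hS.
apply: (@ptws_cvg R W Fl FlF _ (fun w => FF (Sf w) (Zf w)) (FF s0 z0)) => -[q|[q v]].
- rewrite /F /=; case: (eqVneq q p) => [qp|qp]; first subst q.
    apply: cvgM'; first exact: hz (inl p).
    by apply: cvgB'; [exact: cvgc'|exact: cm].
  case: (boolP (p < q)%O) => pq; last exact: hz (inl q).
  apply: (cvg_near_eq (g := fun w => (gam p (Zf w) + beta p (Zf w) * mm (Sf w)) *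
      hhh (Sf w) (Zf w) q * 1)); first by apply: nearW => w; rewrite mulr1.
  rewrite -[X in _ --> X]mulr1.
  apply: (key_cvg hS hZ hX X0 pq); first by apply: nearW => w; rewrite lexx ler01.
  by move=> _; exact: cvgc'.
- rewrite /F /=; case: (q == p).
    apply: cvgM'; last exact: hz (inr _).
    by apply: cvgB'; [exact: cvgc'|exact: cm].
  case: (boolP (p < q)%O) => pq; last exact: hz (inr _).
  apply: (key_cvg hS hZ hX X0 pq).
    by apply: filterS hX => w Xw; apply: Xyy_bnd.
  case: (eqVneq (beta p z0) 0) => [b0|b0] h.
    have t0 : tt z0 q != 0 by case: h => //; rewrite b0 eqxx.
    have t_ev : \forall w \near Fl, tt (Zf w) q != 0.
      by have := @cvgr_neq0 _ R^o _ _ FlF _ _ (hz (inl q)) t0.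
    rewrite (Xyy_eq _ X0 pq t0).
    apply: (cvg_near_eq (g := fun w => Zf w (inr (existT _ q v)) / tt (Zf w) q)).
      by apply: filterS2 hX t_ev => w Xw tw; rewrite (Xyy_eq _ Xw pq tw).
    by apply: cvgM'; [exact: hz (inr _)|apply: cvgV'; [|exact: hz (inl q)]].
  have b_ev : \forall w \near Fl, beta p (Zf w) != 0.
    by have := @cvgr_neq0 _ R^o _ _ FlF _ _ (hz (inl p)) b0.
  rewrite /yy b0.
  apply: (cvg_near_eq (g := fun w => push (dmap K p q)
     (fun u => Zf w (inr (existT _ p u)) / beta p (Zf w)) v)).
    by apply: filterS b_ev => w bw; rewrite bw.
  rewrite /push; apply: cvg_sumr => u _.
  by apply: cvgM'; [exact: hz (inr _)|apply: cvgV'; [|exact: hz (inl p)]].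
Qed.

Local Notation Ys := (hocolim_on R K [set~ p]).

Lemma YX z : Ys z -> Xs z.
Proof.
move=> /hoc_elim [p0 [x [t [[_ xr] [t0 t1] tS ch [zl zr]]]]].
apply: (hoc_intro xr t0 t1 _ ch zl zr) => q tq; split; first by rewrite finset.in_setT.
exact: (tS _ tq).2.
Qed.

Lemma mm0 : mm (0 : R) = 0.
Proof. by rewrite /mm mulr0 sub0r (max_idPl (lerN10 _)). Qed.

Lemma mm1 : mm (1 : R) = 1.
Proof. by rewrite /mm mulr1 (_ : 2 - 1 = 1 :> R) ?(max_idPr ler01) //; lra. Qed.

Lemma FX s z : 0 <= s <= 1 -> Xs z -> Xs (FF s z).
Proof.
move=> s01 /hoc_elim [p0 [x [t [[_ xr] [t0 t1] tS ch [zl zr]]]]].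
by apply: (F_mem HA H1 cA xr t0 t1 tS ch zl zr) => // *; rewrite finset.in_setT.
Qed.

Lemma F1Y z : Xs z -> Ys (FF 1 z).
Proof.
move=> /hoc_elim [p0 [x [t [[_ xr] [t0 t1] tS ch [zl zr]]]]].
apply: (F_mem HA H1 cA xr t0 t1 tS ch zl zr).
- by rewrite ler01 lexx.
- by move=> q qp; rewrite !inE.
- by rewrite mm1 ltxx.
Qed.

Lemma F0id z : Xs z -> FF 0 z = z.
Proof.
move=> /hoc_elim [p0 [x [t [[_ xr] [t0 t1] tS ch [zl zr]]]]].
apply: (F_id H1 cA t0 tS ch zl zr); first by left; rewrite mm0.
by rewrite /mu mul0r subr0.
Qed.

Lemma F1id z : Ys z -> FF 1 z = z.
Proof.
move=> /hoc_elim [p0 [x [t [[_ xr] [t0 t1] tS ch [zl zr]]]]].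
have b0 : beta p z = 0.
  rewrite /beta /tt zl; case: (eqVneq (t p) 0) => // /tS [].
  by rewrite !inE eqxx.
apply: (F_id H1 cA t0 tS ch zl zr); first by right.
by rewrite /mu b0 mul0r mulr0 subr0.
Qed.

Lemma main_equiv : homotopy_equiv R Xs Ys.
Proof.
exists (FF 1), id; split.
- split; last exact: F1Y.
  apply/subspace_continuousP => z0 X0.
  apply: (@F_cvg T (within Xs (nbhs z0)) _ (fun=> 1) id 1 z0) => //.
  + exact: cvgc'.
  + exact: cvg_within.
  + exact: withinT.
- split; last exact: YX.
  by apply: continuous_subspaceT => x; exact: cvg_id.
- exists (fun w => FF (1 - w.1) w.2); split; [|split].
  + apply/subspace_continuousP => -[s0 z0] [I0 X0].
    apply: (@F_cvg _ (within (unit_interval R `*` Xs) (nbhs (s0, z0))) _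
       (fun w => 1 - w.1) snd (1 - s0) z0) => //.
    * apply: cvgB'; first exact: cvgc'.
      by apply: cvg_within_filter; exact: cvg_fst.
    * by apply: cvg_within_filter; exact: cvg_snd.
    * by apply: filterS (withinT _ _) => -[s z] [].
  + move=> s z /andP [s0 s1] Xz; apply: FX => //.
    by rewrite /=; apply/andP; split; lra.
  + by move=> z Xz; rewrite /= subr0 subrr F0id.
- exists snd; split; [|split].
  + by apply: continuous_subspaceT => x; exact: cvg_snd.
  + by [].
  + by move=> z Yz; rewrite /= F1id.
Qed.

End Cont.

Unset Implicit Arguments.
Local Close Scope ring_scope.

Theorem proposition3p6 (R : realType) (d : Order.disp_t) (P : finPOrderType d)
    (K : diagram P) (p : P) :
  homotopically_trivial_up R p ->
  homotopy_equiv R (hocolim_on R K [set: P]) (hocolim_on R K [set~ p]).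
Proof.
move=> [x0 [Ax0 [f [g [[fc fA] [gc gB] [H [Hc [HA Hend]]] _]]]]].
have H0 : forall a, order_complex_up R p a -> H (0%R, a) = g x0.
  by move=> a Aa; rewrite (Hend a Aa).1 /= (fA a Aa).
have H1 : forall a, order_complex_up R p a -> H (1%R, a) = a.
  by move=> a Aa; rewrite (Hend a Aa).2.
have cA : order_complex_up R p (g x0) by apply: gB.
exact: (main_equiv K HA H0 H1 cA Hc).
Qed.
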